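(* For all integers $k\ge3$ and $n\ge k$ there exist a connected unweighted graph $G$ on $n$ vertices, $k$ singleton groups $R_1=\{r_1\},\dots,R_k=\{r_k\}$ and a source vertex $s$ such that every spanning subgraph $H$ of $G$ satisfying $\sigma_H(s,t)\le\alpha\,\sigma_G(s,t)$ for all $t\in V$ with some $\alpha<2-\frac{2}{k}$ has at least $n$ edges.
   Context: Unweighted means every edge has weight $1$. Paths are walks; lengths count edge weights with multiplicity. A group Steiner path from $s$ to $t$ is a path from $s$ to $t$ containing at least one vertex of each group $R_i$; $\sigma_X(s,t)$ is the minimum length of such a path in graph $X$ (with $s=t$ allowed). *)

(* Defs.v *)
From mathcomp Require Import all_boot all_order all_algebra.
From mathcomp Require Export reals.
Set Implicit Arguments. Unset Strict Implicit. Unset Printing Implicit Defensive.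

Definition simple_graph (n : nat) (e : rel 'I_n) : Prop :=
  symmetric e /\ irreflexive e.

Definition connected_graph (n : nat) (e : rel 'I_n) : Prop :=
  forall x y, connect e x y.

Definition spanning_subgraph (n : nat) (H G : rel 'I_n) : Prop :=
  simple_graph H /\ (forall x y, H x y -> G x y).

Definition num_edges (n : nat) (e : rel 'I_n) : nat :=
  #|[set p : 'I_n * 'I_n | (p.1 < p.2)%N && e p.1 p.2]|.

(* A walk from s to t is s :: p with path e s p and last s p = t; its length
   (number of edges, unweighted) is size p.  It is a group Steiner path for
   singleton groups R_i = {r i} if every r i occurs among its vertices. *)
Definition group_steiner_walk (n k : nat) (e : rel 'I_n) (r : 'I_k -> 'I_n)
    (s t : 'I_n) (p : seq 'I_n) : Prop :=
  path e s p /\ last s p = t /\ (forall i, r i \in s :: p).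

Definition is_sigma (n k : nat) (e : rel 'I_n) (r : 'I_k -> 'I_n)
    (s t : 'I_n) (d : nat) : Prop :=
  (exists p, group_steiner_walk e r s t p /\ size p = d) /\
  (forall p, group_steiner_walk e r s t p -> (d <= size p)%N).

(* Main.v *)
Require Import Defs.
From mathcomp Require Import all_boot all_order all_algebra reals.
From mathcomp Require Import zify ring lra.

Definition dist (a b : nat) := ((a - b) + (b - a))%N.

Lemma path_inv (T : Type) (e : rel T) (P : T -> Prop) x p :
  path e x p -> P x -> (forall u v, e u v -> P u -> P v) -> P (last x p).
Proof.
elim: p x => [|y p IH] x //= /andP[exy pp] Px Hs.
apply: IH => //; exact: Hs Px.
Qed.

Section Walk.
Variables (T : eqType) (e : rel T) (f : T -> nat).
Hypothesis Lf : forall u v, e u v -> (f u <= (f v).+1)%N /\ (f v <= (f u).+1)%N.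

Lemma walk_L1 x p : path e x p -> (dist (f x) (f (last x p)) <= size p)%N.
Proof.
rewrite /dist; elim: p x => [|y p IH] x /=; first lia.
move=> /andP[exy pp]; have := IH _ pp; have := Lf _ _ exy; lia.
Qed.

Lemma walk_L2 x p u : path e x p -> u \in x :: p ->
  (dist (f x) (f u) + dist (f u) (f (last x p)) <= size p)%N.
Proof.
move=> pp Hu; move: pp; case/splitPl: Hu => p1 p2 Hl; rewrite cat_path last_cat size_cat Hl.
move=> /andP[p1p p2p]; have := walk_L1 _ _ p1p; have := walk_L1 _ _ p2p.
rewrite Hl /dist; lia.
Qed.

Lemma walk_L3 x p u w : path e x p -> f (last x p) = f x ->
  u \in x :: p -> w \in x :: p -> (2 * dist (f u) (f w) <= size p)%N.
Proof.
move=> pp Hend Hu Hw; move: pp Hend Hw; case/splitPl: Hu => p1 p2 Hl.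
rewrite cat_path last_cat size_cat Hl => /andP[p1p p2p] Hend.
rewrite -cat_cons mem_cat => /orP[Hw|Hw].
- have := walk_L2 _ _ _ p1p Hw; have := walk_L1 _ _ p2p; rewrite Hl Hend /dist; lia.
- have Hw' : w \in u :: p2 by rewrite inE Hw orbT.
  have := walk_L2 _ _ _ p2p Hw'; have := walk_L1 _ _ p1p; rewrite Hl Hend /dist; lia.
Qed.
End Walk.

Definition adjn k a b := ((a.+1 == b) && (b != k)) || ((a == 0) && (b == k.-1)) || ((a == 0) && (b == k)).
Definition pos k c v := if v < k then (if c < v then v - c - 1 else v + k - c - 1) else k - c - 1.

Lemma adjn_lt k a b : 3 <= k -> adjn k a b || adjn k b a -> a < b -> adjn k a b.
Proof. rewrite /adjn; lia. Qed.

Lemma adjn_neq k a : 3 <= k -> adjn k a a = false.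
Proof. rewrite /adjn => ?; apply/negbTE; lia. Qed.

Lemma pend_cross k a b u v : 3 <= k -> adjn k a b -> a < b -> k <= b ->
  adjn k u v || adjn k v u -> u < b -> b <= v -> u = a /\ v = b.
Proof. rewrite /adjn; lia. Qed.

Lemma pos_lip k a b c u v : 3 <= k -> a < b -> b < k ->
  ((b = a.+1 /\ c = a) \/ (a = 0 /\ b = k.-1 /\ c = k.-1)) ->
  adjn k u v || adjn k v u -> ~ (u = a /\ v = b) -> ~ (u = b /\ v = a) ->
  pos k c u <= (pos k c v).+1 /\ pos k c v <= (pos k c u).+1.
Proof.
move=> k3 ab bk Hc Hadj H1 H2; move: Hadj; rewrite /pos /adjn.
repeat (case: ifP; move=> ?); lia.
Qed.

Lemma pos_ab k a b c : 3 <= k -> a < b -> b < k ->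
  ((b = a.+1 /\ c = a) \/ (a = 0 /\ b = k.-1 /\ c = k.-1)) ->
  ((pos k c a - pos k c b) + (pos k c b - pos k c a) = k.-1)%N.
Proof.
move=> k3 ab bk Hc; rewrite /pos.
repeat (case: ifP; move=> ?); lia.
Qed.

Definition Gk (k m : nat) : rel (ordinal m) := fun x y => adjn k x y || adjn k y x.
Arguments Gk k {m}.

Lemma Gk_inord k n a b : a < n.+1 -> b < n.+1 -> adjn k a b ->
  Gk k (inord a : 'I_n.+1) (inord b).
Proof. by move=> ha hb h; rewrite /Gk !inordK // h. Qed.

Lemma Gk_simple k m : 3 <= k -> simple_graph (@Gk k m).
Proof.
move=> k3; split; first by move=> x y; rewrite /Gk orbC.
by move=> x; rewrite /Gk adjn_neq.
Qed.

Lemma Gk_conn k n : 3 <= k -> connected_graph (@Gk k n.+1).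
Proof.
move=> k3.
have H0 : forall m, m < n.+1 -> connect (@Gk k n.+1) ord0 (inord m).
  elim=> [|m IH] hm.
    by have -> : (inord 0 : 'I_n.+1) = ord0 by apply: val_inj; rewrite /= inordK.
  have [mk|mk] := eqVneq m.+1 k.
    apply: connect1; have -> : (ord0 : 'I_n.+1) = inord 0 by apply: val_inj; rewrite /= inordK.
    by apply: Gk_inord => //; rewrite /adjn mk eqxx !orbT.
  apply: connect_trans (IH (ltnW hm)) _; apply: connect1.
  by apply: Gk_inord => //; [exact: ltnW | rewrite /adjn eqxx mk].
move=> x y; apply: (@connect_trans _ _ ord0).
  rewrite (sym_connect_sym (@Gk_simple k n.+1 k3).1).
  by have := H0 _ (ltn_ord x); rewrite inord_val.
by have := H0 _ (ltn_ord y); rewrite inord_val.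
Qed.

Lemma cyc_walk k n (k3 : 3 <= k) (kn : k <= n.+1) : forall l j, j + l < k ->
  exists q, [/\ path (@Gk k n.+1) (inord j) q, last (inord j) q = inord (j + l),
     size q = l & forall i, j <= i <= j + l -> (inord i : 'I_n.+1) \in inord j :: q].
Proof.
elim=> [|l IH] j hjl.
  exists [::]; split => //; first by rewrite addn0.
  move=> i hi; have -> : i = j by lia.
  by rewrite inE eqxx.
have [q [p1 p2 p3 p4]] := IH j.+1 ltac:(lia).
exists (inord j.+1 :: q); split => /=.
- rewrite p1 andbT; apply: Gk_inord; try lia; by rewrite /adjn eqxx; apply/orP; left; apply/negP; lia.
- by rewrite p2 addSnnS.
- by rewrite p3.
- move=> i hi; have [->|ne] := eqVneq i j; first by rewrite inE eqxx.
  rewrite inE; apply/orP; right; apply: p4; lia.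
Qed.

Import Order.TTheory GRing.Theory Num.Theory.
Local Open Scope ring_scope.

Lemma real_contra (R : realType) (k dH dG : nat) (alpha : R) : (3 <= k)%N ->
  (2 * k.-1 <= dH)%N -> (dG <= k)%N -> alpha < 2 - 2 / k%:R ->
  dH%:R <= alpha * dG%:R -> False.
Proof.
move=> k3 hH hG ha hle.
have kE : k = k.-1.+1 by lia.
set K : R := k%:R.
have KE : K = k.-1%:R + 1 by rewrite /K {1}kE -addn1 natrD.
have K3 : 3 <= K by rewrite /K (ler_nat R 3 k).
have K0 : K != 0 by apply/eqP => h; rewrite h in K3; lra.
have h1 : alpha * K < 2 * K - 2.
  have e : (2 - 2 / K) * K = 2 * K - 2 by field.
  rewrite -e ltr_pM2r //; lra.
have h2 : 2 * K - 2 <= dH%:R.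
  have : (2 * k.-1)%:R <= dH%:R :> R by rewrite ler_nat.
  rewrite natrM KE; lra.
have h3 : dG%:R <= K by rewrite /K ler_nat.
have h4 : 0 <= dG%:R :> R by [].
case: (lerP 0 alpha) => ha0.
- have : alpha * dG%:R <= alpha * K by rewrite ler_wpM2l.
  lra.
- have : alpha * dG%:R <= 0 by rewrite mulr_le0_ge0 // ltW.
  lra.
Qed.

Theorem mainTheorem12 (R : realType) (k n : nat) :
  (3 <= k)%N -> (k <= n)%N ->
  exists (G : rel 'I_n) (r : 'I_k -> 'I_n) (s : 'I_n),
    [/\ simple_graph G, connected_graph G, injective r &
      forall H : rel 'I_n, spanning_subgraph H G ->
        (exists alpha : R, alpha < 2 - 2 / k%:R /\
           forall t : 'I_n, exists dH dG : nat,
             [/\ is_sigma H r s t dH, is_sigma G r s t dG &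
                 dH%:R <= alpha * dG%:R]) ->
        (n <= num_edges H)%N].
Proof.
move=> k3 kn.
case: n kn => [|n] kn; first by exfalso; lia.
pose r := fun i : 'I_k => widen_ord kn i.
have rE : forall i : 'I_k, r i = inord i.
  by move=> i; apply: val_inj; rewrite /= inordK //; apply: leq_trans (ltn_ord i) kn.
have i0 : (inord 0 : 'I_n.+1) = ord0 by apply: val_inj; rewrite /= inordK.
exists (Gk k), r, ord0; split.
- exact: Gk_simple.
- exact: Gk_conn.
- by move=> i j /(congr1 val) /= /val_inj.
move=> H [[Hsym Hirr] HG] [alpha [Halpha Hall]].
have claim' : forall x y : 'I_n.+1, (x < y)%N -> Gk k x y -> H x y.
  move=> x y xy Gxy; have Axy := @adjn_lt k x y k3 Gxy xy.
  apply/negPn/negP => nH.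
  have [bk|kb] := ltnP y k.
  - have [dH [dG [[[p [[pp [pl pr]] ps]] _] [_ Gmin] Hle]]] := Hall ord0.
    have [c Hc] : exists c, ((nat_of_ord y = (nat_of_ord x).+1 /\ c = nat_of_ord x) \/
                   (nat_of_ord x = 0 /\ nat_of_ord y = k.-1 /\ c = k.-1))%N.
      move: Axy; rewrite /adjn.
      case: (eqVneq (nat_of_ord y) (nat_of_ord x).+1) => e; [exists (nat_of_ord x) | exists k.-1]; lia.
    have Lip : forall u v, H u v -> (pos k c u <= (pos k c v).+1 /\ pos k c v <= (pos k c u).+1)%N.
      move=> u v Huv; apply: (@pos_lip k x y c u v k3 xy bk Hc (HG _ _ Huv)).
      + move=> [eu ev]; have eu' : u = x by apply: val_inj.
        have ev' : v = y by apply: val_inj.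
        by move: Huv; rewrite eu' ev' (negbTE nH).
      + move=> [eu ev]; have eu' : u = y by apply: val_inj.
        have ev' : v = x by apply: val_inj.
        by move: Huv; rewrite eu' ev' Hsym (negbTE nH).
    have xk : (x < k)%N by apply: ltn_trans xy bk.
    have Hu : x \in ord0 :: p.
      by have := pr (Ordinal xk); rewrite rE /= inord_val.
    have Hw : y \in ord0 :: p.
      by have := pr (Ordinal bk); rewrite rE /= inord_val.
    have := @walk_L3 _ H (fun v : 'I_n.+1 => pos k c v) Lip _ _ _ _ pp _ Hu Hw.
    rewrite pl /dist (@pos_ab k x y c k3 xy bk Hc) ps => /(_ erefl) HdH.
    have [q [q1 q2 q3 q4]] := @cyc_walk k n k3 kn k.-1 0 ltac:(lia).
    have HdG : (dG <= k)%N.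
      suff h : (dG <= size (q ++ [:: ord0]))%N by rewrite size_cat q3 /= in h; lia.
      apply: Gmin; split; [|split].
      + rewrite cat_path -i0 q1 q2 /= andbT /Gk !inordK //=; try lia.
        by rewrite /adjn !eqxx !orbT.
      + by rewrite last_cat.
      + move=> i; rewrite rE -i0 -cat_cons mem_cat; apply/orP; left.
        apply: q4; have := ltn_ord i; lia.
    exact: (@real_contra R k dH dG alpha k3 HdH HdG Halpha Hle).
  - have [dH [dG [[[p [[pp [pl pr]] ps]] _] _ _]]] := Hall y.
    suff : (last ord0 p < y)%N by rewrite pl ltnn.
    apply: (@path_inv _ H (fun v : 'I_n.+1 => (v < y)%N) _ _ pp).
      by rewrite /=; lia.
    move=> u v Huv ult; rewrite ltnNge; apply/negP => yv.
    have [eu ev] := @pend_cross k x y u v k3 Axy xy kb (HG _ _ Huv) ult yv.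
    have eu' : u = x by apply: val_inj.
    have ev' : v = y by apply: val_inj.
    by move: Huv; rewrite eu' ev' (negbTE nH).
have claim : forall x y : 'I_n.+1, Gk k x y -> H x y.
  move=> x y Gxy; case: (ltngtP x y) => c.
  - exact: claim'.
  - by rewrite Hsym; apply: claim' => //; rewrite /Gk orbC.
  - by move: Gxy; rewrite (val_inj c) /Gk adjn_neq.
pose g1 (v : nat) := (if v == 0 then 0 else if v == k then 0 else v.-1)%N.
pose g2 (v : nat) := (if v == 0 then k.-1 else v)%N.
pose g := fun v : 'I_n.+1 => ((inord (g1 v) : 'I_n.+1), (inord (g2 v) : 'I_n.+1)).
have gb1 : forall v : 'I_n.+1, (g1 v < n.+1)%N.
  by move=> v; have := ltn_ord v; rewrite /g1; repeat (case: ifP; move=> ?); lia.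
have gb2 : forall v : 'I_n.+1, (g2 v < n.+1)%N.
  by move=> v; have := ltn_ord v; rewrite /g2; repeat (case: ifP; move=> ?); lia.
have ginj : injective g.
  move=> u v; rewrite /g => -[] /(congr1 (@nat_of_ord _)) e1 /(congr1 (@nat_of_ord _)) e2.
  move: e1 e2.
  rewrite !inordK // => e1 e2.
  apply: ord_inj; move: e1 e2; rewrite /g1 /g2.
  repeat (case: ifP; move=> ?); lia.
apply: (@leq_trans #|g @: [set: 'I_n.+1]|).
  by rewrite (card_imset _ ginj) cardsT card_ord.
rewrite /num_edges.
apply: subset_leq_card; apply/subsetP => _ /imsetP [v _ ->].
rewrite inE /= !inordK //; apply/andP; split.
  by rewrite /g1 /g2; have := ltn_ord v; repeat (case: ifP; move=> ?); lia.
apply: claim; rewrite /Gk !inordK //; rewrite /adjn /g1 /g2.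
have := ltn_ord v; repeat (case: ifP; move=> ?); lia.
Qed.
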